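(* Let $(\mathfrak{h},[\,,\,],\rhd)$ be a right Post-Lie algebra. Then $(\mathcal{U}(\mathfrak{h}),\rhd)$, with its usual Hopf algebra structure and $\rhd$ the unique extension described below, is a right Post-Hopf algebra.
   Context: A right Post-Lie algebra is a Lie algebra $(\mathfrak{h},[\,,\,])$ with bilinear $\rhd$ such that $x\rhd[y,z]=a_\rhd(x,y,z)-a_\rhd(x,z,y)$ and $[x,y]\rhd z=[x\rhd z,y]+[x,y\rhd z]$, where $a_\rhd(x,y,z)=(x\rhd y)\rhd z-x\rhd(y\rhd z)$. $\mathcal{U}(\mathfrak{h})$ is the universal enveloping algebra with coproduct making elements of $\mathfrak{h}$ primitive. Known fact (used as definition of the extension): $\rhd$ extends uniquely to a bilinear map $\mathcal{U}(\mathfrak{h})\otimes\mathcal{U}(\mathfrak{h})\to\mathcal{U}(\mathfrak{h})$ such that for all $f,g,h\in\mathcal{U}(\mathfrak{h})$, $y\in\mathfrak{h}$: $\varepsilon(f\rhd g)=\varepsilon(f)\varepsilon(g)$; $\Delta(f\rhd g)=\Delta(f)\rhd\Delta(g)$; $f\rhd 1=f$; $1\rhd f=\varepsilon(f)1$; $f\rhd(gy)=(f\rhd g)\rhd y-f\rhd(g\rhd y)$; $(fg)\rhd h=(f\rhd h^{(1)})(g\rhd h^{(2)})$; $(f\rhd g)\rhd h=f\rhd\big((g\rhd h^{(1)})h^{(2)}\big)$. A right Post-Hopf algebra is a Hopf algebra $(H,\cdot,1,\Delta,\varepsilon)$ with a coalgebra morphism $\rhd:H\otimes H\to H$ such that $(x\cdot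 y)\rhd z=(x\rhd z^{(1)})\cdot(y\rhd z^{(2)})$, $(x\rhd y)\rhd z=x\rhd\big((y\rhd z^{(1)})\cdot z^{(2)}\big)$, and $\gamma_\rhd(x)(y)=y\rhd x$ is invertible in the convolution algebra $\mathrm{Hom}(H,\mathrm{End}(H))$ with product $(f\star g)(x)=f(x^{(1)})\circ g(x^{(2)})$. *)

(* Defs.v *)
From HB Require Import structures.
From mathcomp Require Import all_boot all_order all_algebra.
Set Implicit Arguments. Unset Strict Implicit. Unset Printing Implicit Defensive.
Import GRing.Theory.
Local Open Scope ring_scope.

Definition is_linear (K : fieldType) (U W : lmodType K) (f : U -> W) : Prop :=
  forall (a : K) (u v : U), f (a *: u + v) = a *: f u + f v.

Definition is_bilinear (K : fieldType) (U V W : lmodType K)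
  (b : U -> V -> W) : Prop :=
  (forall u, is_linear (b u)) /\ (forall v, is_linear (fun u => b u v)).

Definition is_trilinear (K : fieldType) (U V X W : lmodType K)
  (t : U -> V -> X -> W) : Prop :=
  (forall u v, is_linear (t u v)) /\ (forall u x, is_linear (fun v => t u v x))
  /\ (forall v x, is_linear (fun u => t u v x)).

Definition is_lie_bracket (K : fieldType) (h : lmodType K) (br : h -> h -> h) :=
  is_bilinear br /\ (forall x, br x x = 0) /\
  (forall x y z, br x (br y z) + br y (br z x) + br z (br x y) = 0).

Definition assoc_rpl (K : fieldType) (h : lmodType K) (tr : h -> h -> h)
  (x y z : h) : h := tr (tr x y) z - tr x (tr y z).

Definition is_right_post_lie (K : fieldType) (h : lmodType K)
  (br tr : h -> h -> h) : Prop :=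
  is_lie_bracket br /\ is_bilinear tr /\
  (forall x y z, tr x (br y z) = assoc_rpl tr x y z - assoc_rpl tr x z y) /\
  (forall x y z, tr (br x y) z = br (tr x z) y + br x (tr y z)).

Definition is_alg_morph (K : fieldType) (A B : algType K) (F : A -> B) :=
  is_linear F /\ F 1 = 1 /\ (forall a b, F (a * b) = F a * F b).

Definition is_UEA (K : fieldType) (h : lmodType K) (br : h -> h -> h)
  (U : algType K) (iota : h -> U) : Prop :=
  is_linear iota /\
  (forall x y, iota (br x y) = iota x * iota y - iota y * iota x) /\
  (forall (A : algType K) (f : h -> A), is_linear f ->
     (forall x y, f (br x y) = f x * f y - f y * f x) ->
     (exists F : U -> A, is_alg_morph F /\ forall x, F (iota x) = f x) /\
     (forall F G : U -> A, is_alg_morph F -> is_alg_morph G ->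
        (forall x, F (iota x) = f x) -> (forall x, G (iota x) = f x) ->
        forall u, F u = G u)).

(* Coproducts in "Church-encoded Sweedler notation".                         *)
(* An element w of U (x) U is represented through the maps it induces:       *)
(* for every K-module W and bilinear  beta : U -> U -> W,                    *)
(* cop W beta x  stands for  (beta-bar)(Delta x) = sum beta(x(1), x(2)),     *)
(* where beta-bar : U (x) U -> W is the linear map induced by beta.          *)
Definition copT (K : fieldType) (U : lmodType K) :=
  forall W : lmodType K, (U -> U -> W) -> U -> W.

(* Structural requirements making cop a bona fide U(x)U-valued linear map.  *)
Definition cop_wf (K : fieldType) (U : lmodType K) (cop : copT U) : Prop :=
  (forall (W : lmodType K) (beta : U -> U -> W), is_bilinear beta ->
     is_linear (cop W beta)) /\
  (forall (W : lmodType K) (b1 b2 : U -> U -> W) (k : K) (x : U),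
     is_bilinear b1 -> is_bilinear b2 ->
     cop W (fun u v => k *: b1 u v + b2 u v) x = k *: cop W b1 x + cop W b2 x) /\
  (forall (W W' : lmodType K) (phi : W -> W') (beta : U -> U -> W) (x : U),
     is_linear phi -> is_bilinear beta ->
     phi (cop W beta x) = cop W' (fun u v => phi (beta u v)) x).

Definition cop_alg_morph (K : fieldType) (U : algType K) (cop : copT U) :=
  (forall (W : lmodType K) (beta : U -> U -> W), is_bilinear beta ->
     cop W beta 1 = beta 1 1) /\
  (forall (W : lmodType K) (beta : U -> U -> W) (x y : U), is_bilinear beta ->
     cop W beta (x * y) =
     cop W (fun x1 x2 => cop W (fun y1 y2 => beta (x1 * y1) (x2 * y2)) y) x).

Definition is_hopf (K : fieldType) (H : algType K) (cop : copT H)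
  (eps : H -> K) : Prop :=
  cop_wf cop /\ cop_alg_morph cop /\
  is_linear (eps : H -> K^o) /\ eps 1 = 1 /\
  (forall x y, eps (x * y) = eps x * eps y) /\
  (forall (W : lmodType K) (t : H -> H -> H -> W) (x : H), is_trilinear t ->
     cop W (fun a b => cop W (fun c d => t c d b) a) x =
     cop W (fun a b => cop W (fun c d => t a c d) b) x) /\
  (forall x, cop H (fun a b => eps a *: b) x = x) /\
  (forall x, cop H (fun a b => eps b *: a) x = x) /\
  (exists S : H -> H, is_linear S /\
     forall x, cop H (fun a b => S a * b) x = eps x *: 1 /\
               cop H (fun a b => a * S b) x = eps x *: 1).

Definition is_right_post_hopf (K : fieldType) (H : algType K) (cop : copT H)
  (eps : H -> K) (tr : H -> H -> H) : Prop :=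
  is_hopf cop eps /\
  is_bilinear tr /\
  (forall x y, eps (tr x y) = eps x * eps y) /\
  (forall (W : lmodType K) (beta : H -> H -> W) (x y : H), is_bilinear beta ->
     cop W beta (tr x y) =
     cop W (fun x1 x2 => cop W (fun y1 y2 => beta (tr x1 y1) (tr x2 y2)) y) x) /\
  (forall x y z, tr (x * y) z = cop H (fun z1 z2 => tr x z1 * tr y z2) z) /\
  (forall x y z, tr (tr x y) z = tr x (cop H (fun z1 z2 => tr y z1 * z2) z)) /\
  (* gamma(x) = (y |-> y |> x) is convolution-invertible in Hom(H, End H):  *)
  (* there is a linear delta : H -> End(H) with gamma * delta = delta * gamma *)
  (* = unit, where (f * g)(x) = f(x(1)) o g(x(2)) and unit(x) = eps(x) id.   *)
  (exists delta : H -> H -> H, is_bilinear delta /\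
     forall x y, cop H (fun x1 x2 => tr (delta x2 y) x1) x = eps x *: y /\
                 cop H (fun x1 x2 => delta x1 (tr y x2)) x = eps x *: y).

Definition is_UEA_extension (K : fieldType) (h : lmodType K)
  (trh : h -> h -> h) (U : algType K) (iota : h -> U) (cop : copT U)
  (eps : U -> K) (tr : U -> U -> U) : Prop :=
  is_bilinear tr /\
  (forall x y, tr (iota x) (iota y) = iota (trh x y)) /\
  (forall f g, eps (tr f g) = eps f * eps g) /\
  (forall (W : lmodType K) (beta : U -> U -> W) (f g : U), is_bilinear beta ->
     cop W beta (tr f g) =
     cop W (fun f1 f2 => cop W (fun g1 g2 => beta (tr f1 g1) (tr f2 g2)) g) f) /\
  (forall f, tr f 1 = f) /\
  (forall f, tr 1 f = eps f *: 1) /\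
  (forall f g y, tr f (g * iota y) = tr (tr f g) (iota y) - tr f (tr g (iota y))) /\
  (forall f g k, tr (f * g) k = cop U (fun k1 k2 => tr f k1 * tr g k2) k) /\
  (forall f g k, tr (tr f g) k = tr f (cop U (fun k1 k2 => tr g k1 * k2) k)).

(* Main.v *)
Require Import Defs.
From HB Require Import structures.
From mathcomp Require Import all_boot all_order all_algebra.
From Stdlib Require Import ClassicalEpsilon FunctionalExtensionality.
From mathcomp Require Import zify.
Set Implicit Arguments. Unset Strict Implicit. Unset Printing Implicit Defensive.
Import GRing.Theory.
Local Open Scope ring_scope.


Section SubAlg.
Variables (K : fieldType) (U : algType K) (P : U -> Prop).
Hypotheses (P1 : P 1) (Plin : forall a u v, P u -> P v -> P (a *: u + v))
  (Pmul : forall u v, P u -> P v -> P (u * v)).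

Definition Pb : {pred U} := fun u => if excluded_middle_informative (P u) then true else false.
Lemma PbP u : reflect (P u) (u \in Pb).
Proof. rewrite /in_mem /= /Pb; case: excluded_middle_informative => ?; by constructor. Qed.

Lemma Pb_closed : subalg_closed Pb.
Proof.
split; first exact/PbP.
- move=> a u v /PbP pu /PbP pv; apply/PbP; exact: Plin.
- move=> u v /PbP pu /PbP pv; apply/PbP; exact: Pmul.
Qed.
HB.instance Definition _ := GRing.isSubalgClosed.Build K U Pb Pb_closed.
Record SU := MkSU { sval : U; sval_in : sval \in Pb }.
HB.instance Definition _ := [isSub for sval].
HB.instance Definition _ := [Choice of SU by <:].
HB.instance Definition _ := [SubChoice_isSubAlgebra of SU by <:].

Lemma sval_alg : is_alg_morph (sval : SU -> U).
Proof.
split; [|split].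
- move=> a u v; by rewrite /= .
- by [].
- by [].
Qed.
Lemma UEA_ind0 (h : lmodType K) (br : h -> h -> h)
  (iota : h -> U) (HU : is_UEA br iota) (Pi : forall x, P (iota x)) :
  forall u, P u.
Proof.
case: HU => iotaL [iotaB univ].
pose S := SU.
have iin : forall x, iota x \in Pb by move=> x; apply/PbP.
pose f : h -> S := fun x => @MkSU _ (iin x).
have fL : is_linear f.
  by move=> a x y; apply: val_inj => /=; rewrite iotaL.
have fB : forall x y, f (br x y) = f x * f y - f y * f x.
  by move=> x y; apply: val_inj => /=; rewrite iotaB.
have [[F [FA Fi]] _] := univ S f fL fB.
have [_ uniq] := univ U iota iotaL iotaB.
have e : forall u, sval (F u) = u.
  apply: (uniq (fun u => sval (F u)) id).
  - case: FA => FL [F1 FM]; split; [|split].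
    + by move=> a u v; rewrite FL.
    + by rewrite F1.
    + by move=> a b; rewrite FM.
  - by split; [|split].
  - by move=> x; rewrite Fi.
  - by [].
move=> u; rewrite -(e u); apply/PbP; exact: sval_in.
Qed.
End SubAlg.


Section Lin.
Variables (K : fieldType) (V W : lmodType K).
Implicit Types (f : V -> W).
Lemma linD f : is_linear f -> forall u v, f (u + v) = f u + f v.
Proof. by move=> Hf u v; rewrite -[u]scale1r Hf !scale1r. Qed.
Lemma lin0 f : is_linear f -> f 0 = 0.
Proof. move=> Hf; have := linD Hf 0 0; rewrite addr0 => /eqP.
by rewrite -subr_eq0 opprD addrA subrr add0r oppr_eq0 => /eqP. Qed.
Lemma linZ f : is_linear f -> forall a u, f (a *: u) = a *: f u.
Proof. by move=> Hf a u; rewrite -[a *: u]addr0 Hf lin0 // addr0. Qed.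
Lemma linN f : is_linear f -> forall u, f (- u) = - f u.
Proof. by move=> Hf u; rewrite -scaleN1r linZ // scaleN1r. Qed.
Lemma linB f : is_linear f -> forall u v, f (u - v) = f u - f v.
Proof. by move=> Hf u v; rewrite linD // linN. Qed.
Lemma lin_add f g : is_linear f -> is_linear g -> is_linear (fun u => f u + g u).
Proof. move=> Hf Hg a u v; rewrite Hf Hg scalerDr; by rewrite addrACA. Qed.
Lemma lin_sub f g : is_linear f -> is_linear g -> is_linear (fun u => f u - g u).
Proof. move=> Hf Hg a u v; rewrite Hf Hg scalerBr opprD; by rewrite addrACA. Qed.
Lemma lin_cst0 : is_linear (fun _ : V => (0 : W)).
Proof. by move=> a u v; rewrite scaler0 addr0. Qed.
Lemma lin_id : is_linear (fun u : V => u).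
Proof. by []. Qed.
End Lin.

Lemma lin_comp (K : fieldType) (V W X : lmodType K) (f : W -> X) (g : V -> W) :
  is_linear f -> is_linear g -> is_linear (fun u => f (g u)).
Proof. by move=> Hf Hg a u v; rewrite Hg Hf. Qed.
Lemma lin_scal (K : fieldType) (V W : lmodType K) (f : V -> W) c :
  is_linear f -> is_linear (fun u => c *: f u).
Proof. by move=> Hf a u v; rewrite Hf scalerDr !scalerA mulrC. Qed.
Lemma lin_mulr (K : fieldType) (U : algType K) (c : U) : is_linear (fun u : U => u * c).
Proof. by move=> a u v; rewrite mulrDl scalerAl. Qed.
Lemma lin_mull (K : fieldType) (U : algType K) (c : U) : is_linear (fun u : U => c * u).
Proof. by move=> a u v; rewrite mulrDr scalerAr. Qed.
Lemma lin_scalf (K : fieldType) (V W : lmodType K) (e : V -> K^o) (w : W) :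
  is_linear e -> is_linear (fun u => e u *: w).
Proof. by move=> He a u v; rewrite He scalerDl scalerA. Qed.


Section Main.
Unset Implicit Arguments.
Variables (K : fieldType) (h : lmodType K) (br : h -> h -> h)
  (U : algType K) (iota : h -> U) (cop : copT U) (eps : U -> K).
Hypotheses (HU : is_UEA br iota) (Hwf : cop_wf cop) (Ham : cop_alg_morph cop)
  (Hprim : forall (W : lmodType K) (beta : U -> U -> W) (x : h), is_bilinear beta ->
     cop W beta (iota x) = beta (iota x) 1 + beta 1 (iota x))
  (epsL : is_linear (eps : U -> K^o)) (eps1 : eps 1 = 1)
  (epsM : forall u v, eps (u * v) = eps u * eps v) (epsi : forall x, eps (iota x) = 0).
Set Implicit Arguments.

Inductive Fil : nat -> U -> Prop :=
| Fil1 : Fil 0 1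
| FilL k a u v : Fil k u -> Fil k v -> Fil k (a *: u + v)
| FilS k u : Fil k u -> Fil k.+1 u
| FilM k u y : Fil k u -> Fil k.+1 (u * iota y).

Lemma Fil_mono k k' u : Fil k u -> (k <= k')%N -> Fil k' u.
Proof.
move=> Hk /subnKC <-; elim: (k' - k)%N => [|n IH]; first by rewrite addn0.
by rewrite addnS; apply: FilS.
Qed.

Lemma Fil_all u : exists k, Fil k u.
Proof.
pose P u := forall v k, Fil k v -> exists k', Fil k' (v * u).
suff: P u by move=> /(_ 1 0 Fil1) [k']; rewrite mul1r; exists k'.
move: u; apply: (UEA_ind0 (P := P) _ _ _ HU).
- by move=> v k Hv; exists k; rewrite mulr1.
- move=> a u w Pu Pw v k Hv.
  have [k1 H1] := Pu v k Hv; have [k2 H2] := Pw v k Hv.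
  exists (maxn k1 k2); rewrite mulrDr -scalerAr; apply: FilL.
  + by apply: Fil_mono H1 _; rewrite leq_maxl.
  + by apply: Fil_mono H2 _; rewrite leq_maxr.
- move=> u w Pu Pw v k Hv; have [k1 H1] := Pu v k Hv; have [k2 H2] := Pw _ _ H1.
  by exists k2; rewrite mulrA.
- by move=> x v k Hv; exists k.+1; apply: FilM.
Qed.

Lemma copL (W : lmodType K) (beta : U -> U -> W) : is_bilinear beta -> is_linear (cop W beta).
Proof. by case: Hwf => H _ Hb; apply: H. Qed.

Lemma copE (W : lmodType K) (b1 b2 : U -> U -> W) x : (forall u v, b1 u v = b2 u v) -> cop W b1 x = cop W b2 x.
Proof. move=> E; have -> // : b1 = b2; by apply: functional_extensionality => u; apply: functional_extensionality. Qed.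

Lemma copD (W : lmodType K) (b1 b2 : U -> U -> W) x : is_bilinear b1 -> is_bilinear b2 ->
  cop W (fun u v => b1 u v + b2 u v) x = cop W b1 x + cop W b2 x.
Proof.
case: Hwf => _ [H _] Hb1 Hb2; rewrite -[cop W b1 x]scale1r -H //.
by apply: copE => u v; rewrite scale1r.
Qed.

Lemma copZD (W : lmodType K) (b1 b2 : U -> U -> W) k x : is_bilinear b1 -> is_bilinear b2 ->
  cop W (fun u v => k *: b1 u v + b2 u v) x = k *: cop W b1 x + cop W b2 x.
Proof. by case: Hwf => _ [H _]; apply: H. Qed.

Lemma copPhi (W W' : lmodType K) (phi : W -> W') (beta : U -> U -> W) x :
  is_linear phi -> is_bilinear beta ->
  phi (cop W beta x) = cop W' (fun u v => phi (beta u v)) x.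
Proof. by case: Hwf => _ [_ H]; apply: H. Qed.

Lemma cop1 (W : lmodType K) (beta : U -> U -> W) : is_bilinear beta -> cop W beta 1 = beta 1 1.
Proof. by case: Ham => H _; apply: H. Qed.

Lemma bil_comp_mul (W : lmodType K) (beta : U -> U -> W) (a b : U) : is_bilinear beta ->
  is_bilinear (fun y1 y2 => beta (a * y1) (b * y2)).
Proof.
case=> H1 H2; split=> u.
- exact: (lin_comp (H1 _) (lin_mull _)).
- exact: (lin_comp (H2 _) (lin_mull _)).
Qed.

Lemma copM (W : lmodType K) (beta : U -> U -> W) u y : is_bilinear beta ->
  cop W beta (u * iota y) = cop W (fun a b => beta (a * iota y) b + beta a (b * iota y)) u.
Proof.
move=> Hb; case: Ham => _ -> //; apply: copE => a b.
by rewrite Hprim ?mulr1 //; apply: bil_comp_mul.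
Qed.


Lemma bil_cop_l (W : lmodType K) (t : U -> U -> U -> W) : is_trilinear t ->
  is_bilinear (fun a b => cop W (fun c d => t c d b) a).
Proof.
case=> [T1 [T2 T3]]; have Bb : forall b, is_bilinear (fun c d => t c d b).
  by move=> b; split=> u; [apply: T2 | apply: T3].
split=> u.
- move=> k b b'; rewrite -copZD //; apply: copE => c d; exact: T1.
- exact: copL.
Qed.

Lemma bil_cop_r (W : lmodType K) (t : U -> U -> U -> W) : is_trilinear t ->
  is_bilinear (fun a b => cop W (fun c d => t a c d) b).
Proof.
case=> [T1 [T2 T3]]; have Bb : forall a, is_bilinear (fun c d => t a c d).
  by move=> a; split=> u; [apply: T1 | apply: T2].
split=> u.
- exact: copL.
- move=> k b b'; rewrite -copZD //; apply: copE => c d; exact: T3.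
Qed.

Lemma tri_add (W : lmodType K) (t1 t2 : U -> U -> U -> W) : is_trilinear t1 -> is_trilinear t2 ->
  is_trilinear (fun c d e => t1 c d e + t2 c d e).
Proof.
case=> [A1 [A2 A3]] [B1 [B2 B3]]; split; [|split] => *; exact: lin_add.
Qed.

Lemma tri_m1 (W : lmodType K) (t : U -> U -> U -> W) w : is_trilinear t ->
  is_trilinear (fun c d e => t (c * w) d e).
Proof.
case=> [A1 [A2 A3]]; split; [|split] => * //; exact: (lin_comp (A3 _ _) (lin_mulr _)).
Qed.
Lemma tri_m2 (W : lmodType K) (t : U -> U -> U -> W) w : is_trilinear t ->
  is_trilinear (fun c d e => t c (d * w) e).
Proof.
case=> [A1 [A2 A3]]; split; [|split] => * //; exact: (lin_comp (A2 _ _) (lin_mulr _)).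
Qed.
Lemma tri_m3 (W : lmodType K) (t : U -> U -> U -> W) w : is_trilinear t ->
  is_trilinear (fun c d e => t c d (e * w)).
Proof.
case=> [A1 [A2 A3]]; split; [|split] => * //; exact: (lin_comp (A1 _ _) (lin_mulr _)).
Qed.

Definition LH (W : lmodType K) (t : U -> U -> U -> W) x :=
  cop W (fun a b => cop W (fun c d => t c d b) a) x.
Definition RH (W : lmodType K) (t : U -> U -> U -> W) x :=
  cop W (fun a b => cop W (fun c d => t a c d) b) x.
Definition tstep (W : lmodType K) (t : U -> U -> U -> W) y :=
  fun c d e => t (c * iota y) d e + t c (d * iota y) e + t c d (e * iota y).

Lemma tri_step (W : lmodType K) (t : U -> U -> U -> W) y : is_trilinear t ->
  is_trilinear (tstep t y).
Proof.
move=> T; apply: tri_add; [apply: tri_add|]; 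
  [exact: tri_m1 | exact: tri_m2 | exact: tri_m3].
Qed.

Lemma bil_tb (W : lmodType K) (t : U -> U -> U -> W) b : is_trilinear t ->
  is_bilinear (fun c d => t c d b).
Proof. by case=> [T1 [T2 T3]]; split=> u; [apply: T2 | apply: T3]. Qed.
Lemma bil_ta (W : lmodType K) (t : U -> U -> U -> W) a : is_trilinear t ->
  is_bilinear (fun c d => t a c d).
Proof. by case=> [T1 [T2 T3]]; split=> u; [apply: T1 | apply: T2]. Qed.

Lemma LH_step (W : lmodType K) (t : U -> U -> U -> W) x y : is_trilinear t ->
  LH t (x * iota y) = LH (tstep t y) x.
Proof.
move=> T; rewrite /LH copM; last exact: bil_cop_l.
apply: copE => a b; rewrite copM; last exact: bil_tb.
rewrite /tstep [RHS]copD; [done|exact: (bil_tb b (tri_add (tri_m1 (iota y) T) (tri_m2 (iota y) T)))|exact: (bil_tb b (tri_m3 (iota y) T))].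
Qed.

Lemma RH_step (W : lmodType K) (t : U -> U -> U -> W) x y : is_trilinear t ->
  RH t (x * iota y) = RH (tstep t y) x.
Proof.
move=> T; rewrite /RH copM; last exact: bil_cop_r.
apply: copE => a b; rewrite copM; last exact: bil_ta.
have -> : tstep t y a = fun c d => t (a * iota y) c d + (t a (c * iota y) d + t a c (d * iota y)).
  by apply: functional_extensionality => c; apply: functional_extensionality => d; rewrite /tstep addrA.
rewrite [RHS]copD; [done|exact: (bil_ta a (tri_m1 (iota y) T))|exact: (bil_ta a (tri_add (tri_m2 (iota y) T) (tri_m3 (iota y) T)))].
Qed.

Lemma coassoc_Fil k x : Fil k x -> forall (W : lmodType K) (t : U -> U -> U -> W),
  is_trilinear t -> LH t x = RH t x.
Proof.
elim=> {k x} [|k a u v _ IHu _ IHv|k u _ IH|k u y _ IH] W t T.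
- by rewrite /LH /RH !cop1 //; [exact: bil_ta|exact: bil_cop_r|exact: bil_tb|exact: bil_cop_l].
- rewrite /LH /RH (copL (bil_cop_l T)) (copL (bil_cop_r T)).
  by have := IHu W t T; have := IHv W t T; rewrite /LH /RH => -> ->.
- exact: IH.
- by rewrite LH_step // RH_step //; apply: IH; apply: tri_step.
Qed.

Lemma counit_l_Fil k x : Fil k x -> cop U (fun a b => eps a *: b) x = x.
Proof.
have Bb : is_bilinear (fun a b : U => eps a *: b).
  split=> u; [by move=> a b c; rewrite scalerDr !scalerA mulrC | exact: lin_scalf].
elim=> {k x} [|k a u v _ IHu _ IHv|k u _ IH|k u y _ IH].
- by rewrite cop1 // eps1 scale1r.
- by rewrite (copL Bb) IHu IHv.
- exact: IH.
- rewrite copM // -[in RHS]IH (copPhi _ (lin_mulr (iota y))) //.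
  apply: copE => a b; rewrite epsM epsi mulr0 scale0r add0r.
  by rewrite scalerAl.
Qed.

Lemma counit_r_Fil k x : Fil k x -> cop U (fun a b => eps b *: a) x = x.
Proof.
have Bb : is_bilinear (fun a b : U => eps b *: a).
  split=> u; [exact: lin_scalf | by move=> a b c; rewrite scalerDr !scalerA mulrC].
elim=> {k x} [|k a u v _ IHu _ IHv|k u _ IH|k u y _ IH].
- by rewrite cop1 // eps1 scale1r.
- by rewrite (copL Bb) IHu IHv.
- exact: IH.
- rewrite copM // -[in RHS]IH (copPhi _ (lin_mulr (iota y))) //.
  apply: copE => a b; rewrite epsM epsi mulr0 scale0r addr0.
  by rewrite scalerAl.
Qed.


Implicit Types (f g : U -> U -> U).

Lemma cop0 (W : lmodType K) x : cop W (fun _ _ => 0) x = 0.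
Proof.
have L : is_linear (fun w : W => 0 *: w) by move=> a u v; rewrite !scale0r scaler0 addr0.
have B : is_bilinear (fun _ _ : U => (0 : W)) by split=> _; exact: lin_cst0.
transitivity (cop W (fun (u v : U) => 0 *: (0 : W)) x); first by apply: copE => u v; rewrite scaler0.
by rewrite -(copPhi x L B) scale0r.
Qed.

Definition conv (f g : U -> U -> U) x z := cop U (fun a b => f a (g b z)) x.
Definition ee (x z : U) := eps x *: z.

Lemma bil_ee : is_bilinear ee.
Proof. split=> u; [by move=> a b c; rewrite /ee scalerDr !scalerA mulrC | exact: lin_scalf]. Qed.

Lemma bil_inner (f g : U -> U -> U) z : is_bilinear f -> is_bilinear g ->
  is_bilinear (fun a b => f a (g b z)).
Proof.
case=> F1 F2 [G1 G2]; split=> u.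
- exact: (lin_comp (F1 u) (G2 z)).
- exact: F2.
Qed.

Lemma bil_conv f g : is_bilinear f -> is_bilinear g -> is_bilinear (conv f g).
Proof.
move=> F G; split=> u.
- move=> k z z'; rewrite /conv -copZD; [|exact: (bil_inner z F G)|exact: (bil_inner z' F G)].
  apply: copE => a b; case: F => F1 _; case: G => G1 _; by rewrite G1 F1.
- by move=> k x x'; apply: (copL (bil_inner u F G)).
Qed.

Lemma conv_ext f f' g g' x z : (forall a b, f a b = f' a b) -> (forall a b, g a b = g' a b) ->
  conv f g x z = conv f' g' x z.
Proof. by move=> E1 E2; apply: copE => a b; rewrite E1 E2. Qed.

Lemma conv_assoc f g (k : U -> U -> U) x z : is_bilinear f -> is_bilinear g -> is_bilinear k ->
  conv (conv f g) k x z = conv f (conv g k) x z.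
Proof.
move=> [F1 F2] [G1 G2] [K1 K2].
pose t c d e := f c (g d (k e z)).
have T : is_trilinear t.
  split; [|split] => * .
  - exact: (lin_comp (F1 _) (lin_comp (G1 _) (K2 _))).
  - exact: (lin_comp (F1 _) (G2 _)).
  - exact: F2.
have [j Hj] := Fil_all x.
have := coassoc_Fil Hj T; rewrite /LH /RH /t /conv => E.
rewrite E; apply: copE => a b; rewrite (copPhi _ (F1 a)) //.
exact: (bil_inner _ (conj G1 G2) (conj K1 K2)).
Qed.

Lemma conv_e_l f x z : is_bilinear f -> conv ee f x z = f x z.
Proof.
move=> [F1 F2]; have [j Hj] := Fil_all x.
rewrite -{2}(counit_l_Fil Hj) (copPhi _ (F2 z)); last first.
  split=> u; [by move=> a b c; rewrite scalerDr !scalerA mulrC | exact: lin_scalf].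
by apply: copE => a b; exact: (esym (linZ (F2 z) _ _)).
Qed.

Lemma conv_e_r f x z : is_bilinear f -> conv f ee x z = f x z.
Proof.
move=> [F1 F2]; have [j Hj] := Fil_all x.
rewrite -{2}(counit_r_Fil Hj) (copPhi _ (F2 z)); last first.
  split=> u; [exact: lin_scalf | by move=> a b c; rewrite scalerDr !scalerA mulrC].
by apply: copE => a b; rewrite (linZ (F1 a)); exact: (esym (linZ (F2 z) _ _)).
Qed.

Lemma bil_add f g : is_bilinear f -> is_bilinear g -> is_bilinear (fun x z => f x z + g x z).
Proof. by case=> F1 F2 [G1 G2]; split=> u; apply: lin_add. Qed.
Lemma bil_sub f g : is_bilinear f -> is_bilinear g -> is_bilinear (fun x z => f x z - g x z).
Proof. by case=> F1 F2 [G1 G2]; split=> u; apply: lin_sub. Qed.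

Lemma conv_add_l f1 f2 g x z : is_bilinear f1 -> is_bilinear f2 -> is_bilinear g ->
  conv (fun x z => f1 x z + f2 x z) g x z = conv f1 g x z + conv f2 g x z.
Proof. by move=> F1 F2 G; rewrite /conv copD //; [exact: (bil_inner z F1 G)|exact: (bil_inner z F2 G)]. Qed.
Lemma conv_sub_l f1 f2 g x z : is_bilinear f1 -> is_bilinear f2 -> is_bilinear g ->
  conv (fun x z => f1 x z - f2 x z) g x z = conv f1 g x z - conv f2 g x z.
Proof.
move=> F1 F2 G; rewrite /conv [RHS]addrC -scaleN1r -copZD; [|exact: (bil_inner z F2 G)|exact: (bil_inner z F1 G)].
by apply: copE => a b; rewrite scaleN1r addrC.
Qed.
Lemma conv_add_r f g1 g2 x z : is_bilinear f -> is_bilinear g1 -> is_bilinear g2 ->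
  conv f (fun x z => g1 x z + g2 x z) x z = conv f g1 x z + conv f g2 x z.
Proof.
move=> F G1 G2; rewrite /conv -copD; [|exact: (bil_inner z F G1)|exact: (bil_inner z F G2)].
by apply: copE => a b; case: F => F1 _; rewrite linD.
Qed.
Lemma conv_sub_r f g1 g2 x z : is_bilinear f -> is_bilinear g1 -> is_bilinear g2 ->
  conv f (fun x z => g1 x z - g2 x z) x z = conv f g1 x z - conv f g2 x z.
Proof.
move=> F G1 G2; rewrite /conv [RHS]addrC -scaleN1r -copZD; [|exact: (bil_inner z F G2)|exact: (bil_inner z F G1)].
by apply: copE => a b; case: F => F1 _; rewrite linB // scaleN1r addrC.
Qed.

Definition van (a : nat) (f : U -> U -> U) :=
  forall k u, Fil k u -> (k < a)%N -> forall z, f u z = 0.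
Definition Dy (y : h) (f : U -> U -> U) := fun a z => f (a * iota y) z.

Lemma bil_Dy y f : is_bilinear f -> is_bilinear (Dy y f).
Proof. case=> F1 F2; split=> u; [exact: F1 | exact: (lin_comp (F2 _) (lin_mulr _))]. Qed.

Lemma van_Dy y a f : van a f -> van a.-1 (Dy y f).
Proof. move=> V k u Hu Hk z; apply: (V k.+1); [exact: FilM | lia]. Qed.

Lemma conv_M f g u y z : is_bilinear f -> is_bilinear g ->
  conv f g (u * iota y) z = conv (Dy y f) g u z + conv f (Dy y g) u z.
Proof.
move=> F G; rewrite /conv copM; last exact: (bil_inner z F G).
rewrite copD //; [exact: (bil_inner _ (bil_Dy y F) G)| exact: (bil_inner _ F (bil_Dy y G))].
Qed.

Lemma van_conv k u : Fil k u -> forall a b f g, is_bilinear f -> is_bilinear g ->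
  van a f -> van b g -> (k < a + b)%N -> forall z, conv f g u z = 0.
Proof.
elim=> {k u} [|k c u v _ IHu _ IHv|k u _ IH|k u y _ IH] a b f g F G Vf Vg Hk z.
- rewrite /conv cop1; last exact: (bil_inner z F G).
  case: a Vf Hk => [|a] Vf Hk.
  + by rewrite (Vg 0%N 1 Fil1 Hk z); case: F => F1 _; rewrite lin0.
  + exact: (Vf 0%N 1 Fil1).
- by rewrite /conv (copL (bil_inner _ F G)) -!/(conv f g _ _) (IHu a b) // (IHv a b) // scaler0 addr0.
- apply: (IH a b) => //; lia.
- rewrite conv_M // (IH a.-1 b) ?(IH a b.-1) ?addr0 //; try exact: bil_Dy; try exact: van_Dy; lia.
Qed.


Section Inv.
Variable gam : U -> U -> U.
Hypotheses (Gb : is_bilinear gam) (G1 : forall z, gam 1 z = z).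

Definition Mg x z := ee x z - gam x z.
Fixpoint pw n : U -> U -> U :=
  match n with 0 => ee | n'.+1 => conv Mg (pw n') end.
Fixpoint sp n : U -> U -> U :=
  match n with 0 => fun _ _ => 0 | n'.+1 => fun x z => sp n' x z + pw n' x z end.

Lemma bil_Mg : is_bilinear Mg.
Proof. exact: bil_sub bil_ee Gb. Qed.
Lemma bil_pw n : is_bilinear (pw n).
Proof. elim: n => [|n IH] /=; [exact: bil_ee | exact: bil_conv bil_Mg IH]. Qed.
Lemma bil_sp n : is_bilinear (sp n).
Proof.
elim: n => [|n IH] /=; last exact: bil_add IH (bil_pw n).
by split=> _; exact: lin_cst0.
Qed.

Lemma van_Mg : van 1 Mg.
Proof.
move=> k u; elim=> {k u} [|k a u v _ IHu _ IHv|k u _ IH|k u y _ IH] Hk z //.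
- by rewrite /Mg /ee G1 eps1 scale1r subrr.
- have [_ L] := bil_Mg; by rewrite (L z) IHu // IHv // scaler0 addr0.
Qed.

Lemma van_pw n : van n (pw n).
Proof.
elim: n => [|n IH] /=; first by [].
move=> k u Hu Hk z; apply: (van_conv Hu (a := 1) (b := n)) => //.
- exact: bil_Mg.
- exact: bil_pw.
- exact: van_Mg.
Qed.

Lemma gam_eq x z : gam x z = ee x z - Mg x z.
Proof. by rewrite /Mg opprB addrC subrK. Qed.

Lemma conv_gs n x z : conv gam (sp n) x z = ee x z - pw n x z.
Proof.
elim: n x z => [|n IH] x z /=.
- by rewrite subrr /conv; apply: etrans (cop0 _ x); apply: copE => a b; case: Gb => Gl _; rewrite lin0.
- rewrite conv_add_r //; [|exact: bil_sp|exact: bil_pw].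
  rewrite IH (conv_ext (f' := fun x z => ee x z - Mg x z) (g' := pw n)) //; last exact: gam_eq.
  rewrite conv_sub_l; [|exact: bil_ee|exact: bil_Mg|exact: bil_pw].
  by rewrite conv_e_l; [rewrite addrA subrK | exact: bil_pw].
Qed.

Lemma pw_comm n x z : conv (pw n) Mg x z = pw n.+1 x z.
Proof.
elim: n x z => [|n IH] x z /=.
- by rewrite conv_e_l ?conv_e_r //; exact: bil_Mg.
- rewrite conv_assoc; [|exact: bil_Mg|exact: bil_pw|exact: bil_Mg].
  apply: conv_ext => // a b; exact: IH.
Qed.

Lemma conv_sg n x z : conv (sp n) gam x z = ee x z - pw n x z.
Proof.
elim: n x z => [|n IH] x z /=.
- by rewrite subrr /conv cop0.
- rewrite conv_add_l //; [|exact: bil_sp|exact: bil_pw].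
  rewrite IH (conv_ext (f' := pw n) (g' := fun x z => ee x z - Mg x z)) //; last exact: gam_eq.
  rewrite conv_sub_r; [|exact: bil_pw|exact: bil_ee|exact: bil_Mg].
  by rewrite conv_e_r ?pw_comm; [rewrite addrA subrK | exact: bil_pw].
Qed.

Lemma sp_stab k x : Fil k x -> forall n z, (k < n)%N -> sp n x z = sp k.+1 x z.
Proof.
move=> Hx n z; elim: n => [|n IH] //= Hn.
case: (ltnP k n) => Hkn.
- by rewrite IH // (van_pw Hx Hkn) addr0.
- by have -> : n = k by lia.
Qed.

Definition nx (x : U) : nat := proj1_sig (constructive_indefinite_description _ (Fil_all x)).
Lemma nxP x : Fil (nx x) x.
Proof. by rewrite /nx; case: constructive_indefinite_description. Qed.

Definition del (x z : U) := sp (nx x).+1 x z.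

Lemma del_eq k x : Fil k x -> forall n z, (k < n)%N -> del x z = sp n x z.
Proof.
move=> Hx n z Hn; rewrite /del.
have H1 := nxP x.
rewrite -(sp_stab H1 (n := (maxn (nx x) n).+1)); last lia.
rewrite (sp_stab Hx (n := (maxn (nx x) n).+1)); last lia.
by rewrite (sp_stab Hx z Hn).
Qed.

Lemma bil_del : is_bilinear del.
Proof.
split=> u.
- by move=> a v w; rewrite /del; case: (bil_sp (nx u).+1) => L _; rewrite L.
- move=> a v w.
  have [k1 H1] := Fil_all v; have [k2 H2] := Fil_all w.
  pose m := maxn k1 k2.
  have H1' : Fil m v by apply: Fil_mono H1 _; rewrite leq_maxl.
  have H2' : Fil m w by apply: Fil_mono H2 _; rewrite leq_maxr.
  rewrite (del_eq (FilL a H1' H2') (n := m.+1)) // (del_eq H1' (n := m.+1)) //.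
  rewrite (del_eq H2' (n := m.+1)) //.
  by case: (bil_sp m.+1) => _ L; rewrite L.
Qed.

Lemma van_diff n : van n (fun x z => del x z - sp n x z).
Proof. by move=> k u Hu Hk z; rewrite (del_eq Hu z Hk) subrr. Qed.

Lemma conv_gd x z : conv gam del x z = ee x z.
Proof.
have [k Hk] := Fil_all x.
have E : conv gam (fun x z => del x z - sp k.+1 x z) x z = 0.
  apply: (van_conv Hk (a := 0) (b := k.+1)) => //.
  - exact: bil_sub bil_del (bil_sp _).
  - exact: van_diff.
move: E; rewrite conv_sub_r //; [|exact: bil_del|exact: bil_sp].
move/eqP; rewrite subr_eq0 => /eqP ->; rewrite conv_gs.
by rewrite (van_pw Hk (ltnSn k)) subr0.
Qed.

Lemma conv_dg x z : conv del gam x z = ee x z.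
Proof.
have [k Hk] := Fil_all x.
have E : conv (fun x z => del x z - sp k.+1 x z) gam x z = 0.
  apply: (van_conv Hk (a := k.+1) (b := 0)) => //.
  - exact: bil_sub bil_del (bil_sp _).
  - exact: van_diff.
  - by rewrite addn0.
move: E; rewrite conv_sub_l //; [|exact: bil_del|exact: bil_sp].
move/eqP; rewrite subr_eq0 => /eqP ->; rewrite conv_sg.
by rewrite (van_pw Hk (ltnSn k)) subr0.
Qed.

End Inv.


Definition isL (f : U -> U -> U) := forall x w, f x w = f x 1 * w.

Lemma conv_isL f g : is_bilinear f -> is_bilinear g -> isL f -> isL g -> isL (conv f g).
Proof.
move=> F G Lf Lg x w; rewrite /conv (copPhi _ (lin_mulr w)); last exact: (bil_inner 1 F G).
apply: copE => a b; rewrite Lf Lg mulrA -Lf; done.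
Qed.

Lemma del_isL gam : is_bilinear gam -> isL gam -> isL (del gam).
Proof.
move=> Gb Lg.
have Le : isL ee by move=> x w; rewrite /ee -scalerAl mul1r.
have LM : isL (Mg gam) by move=> x w; rewrite /Mg mulrBl -Le -Lg.
have Lp : forall n, isL (pw gam n).
  elim=> [|n IH] //=; apply: conv_isL => //; [exact: bil_Mg | exact: bil_pw].
have Ls : forall n, isL (sp gam n).
  by elim=> [|n IH] x w /=; [rewrite mul0r | rewrite IH Lp mulrDl].
by move=> x w; rewrite /del Ls.
Qed.

Lemma main_sec (trh : h -> h -> h) (tr : U -> U -> U) :
  is_UEA_extension trh iota cop eps tr -> is_right_post_hopf cop eps tr.
Proof.
move=> [trB [_ [epsT [copTr [tr1 [_ [_ [trM trA]]]]]]]].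
have [trB1 trB2] := trB.
split; last split; last split; last split; last split; last split.
- split=> //; split=> //; split=> //; split=> //; split=> //.
  split; [|split; [|split]].
  + move=> W t x T; have [j Hj] := Fil_all x; exact: (coassoc_Fil Hj T).
  + by move=> x; have [j Hj] := Fil_all x; exact: (counit_l_Fil Hj).
  + by move=> x; have [j Hj] := Fil_all x; exact: (counit_r_Fil Hj).
  + pose gam0 := fun x z : U => x * z.
    have Gb : is_bilinear gam0 by split=> u; [exact: lin_mull | exact: lin_mulr].
    have G1 : forall z, gam0 1 z = z by move=> z; rewrite /gam0 mul1r.
    have Lg : isL gam0 by move=> x w; rewrite /gam0 mulr1.
    exists (fun x => del gam0 x 1); split.
    * by case: (bil_del Gb G1) => _ L; apply: L.
    * move=> x; split.
      -- have := conv_dg Gb G1 x 1; rewrite /conv /ee => <-.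
         by apply: copE => a b; rewrite /gam0 mulr1 -del_isL.
      -- by have := conv_gd Gb G1 x 1; rewrite /conv /ee.
- exact: trB.
- exact: epsT.
- exact: copTr.
- exact: trM.
- exact: trA.
- pose gamT := fun x z : U => tr z x.
  have Gb : is_bilinear gamT by split=> u; [exact: trB2 | exact: trB1].
  have G1 : forall z, gamT 1 z = z by move=> z; rewrite /gamT tr1.
  exists (del gamT); split; first exact: bil_del.
  move=> x y; split.
  + by have := conv_gd Gb G1 x y; rewrite /conv /ee.
  + by have := conv_dg Gb G1 x y; rewrite /conv /ee.
Qed.

End Main.

Unset Implicit Arguments.
Theorem corollary3p4 (K : fieldType) (h : lmodType K) (br trh : h -> h -> h)
  (U : algType K) (iota : h -> U) (cop : copT U) (eps : U -> K)
  (tr : U -> U -> U) :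
  is_right_post_lie br trh ->
  is_UEA br iota ->
  (* the usual coproduct of U(h): the algebra morphism with iota x primitive *)
  cop_wf cop -> cop_alg_morph cop ->
  (forall (W : lmodType K) (beta : U -> U -> W) (x : h), is_bilinear beta ->
     cop W beta (iota x) = beta (iota x) 1 + beta 1 (iota x)) ->
  (* the usual counit of U(h) *)
  is_linear (eps : U -> K^o) -> eps 1 = 1 ->
  (forall u v, eps (u * v) = eps u * eps v) ->
  (forall x, eps (iota x) = 0) ->
  is_UEA_extension trh iota cop eps tr ->
  is_right_post_hopf cop eps tr.
Proof.
move=> _ HU Hwf Ham Hprim epsL eps1 epsM epsi Hext.
exact: (main_sec HU Hwf Ham Hprim epsL eps1 epsM epsi Hext).
Qed.
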